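(* Let $F\subseteq\{1,\dots,d\}$ and $\beta=\hat\beta(F)$. Let $\beta'\in\mathbb{R}^d$ have support $F'$, and let $s$ be a positive integer with $|F\cup F'|\le s$. Let $i$ be an index with $|\nabla Q(\beta)_i|=\|\nabla Q(\beta)\|_\infty$. Then $$|F'-F|\big(Q(\beta)-\min_\eta Q(\beta+\eta e_i)\big)\ge\frac{\rho_-(s)}{\rho_+(1)}\big(Q(\beta)-Q(\beta')\big).$$
   Context: Let $Q:\mathbb{R}^d\to\mathbb{R}$ be convex and continuously differentiable. $e_j$ is the $j$-th standard basis vector, $\mathrm{supp}(\beta)=\{j:\beta_j\ne0\}$, $\|\beta\|_0=|\mathrm{supp}(\beta)|$, $A-B$ is set difference. For $F\subseteq\{1,\dots,d\}$, $\hat\beta(F)$ denotes a minimizer of $Q$ over $\{\beta:\mathrm{supp}(\beta)\subseteq F\}$ (assumed to exist). For a positive integer $s$, the restricted strong convexity constants $\rho_-(s),\rho_+(s)>0$ are constants such that for all $\beta,\beta'\in\mathbb{R}^d$ with $\|\beta'-\beta\|_0\le s$: $\frac{\rho_-(s)}{2}\|\beta'-\beta\|^2\le Q(\beta')-Q(\beta)-\langle\nabla Q(\beta),\beta'-\beta\rangle\le\frac{\rho_+(s)}{2}\|\beta'-\beta\|^2.$ *)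

(* Defs.v *)
From Stdlib Require Import Reals.
From mathcomp Require Import all_boot.
Set Implicit Arguments. Unset Strict Implicit. Unset Printing Implicit Defensive.

Open Scope R_scope.

Definition vec (d : nat) := 'I_d -> R.

Definition vadd d (u v : vec d) : vec d := fun j => u j + v j.
Definition vsub d (u v : vec d) : vec d := fun j => u j - v j.
Definition vscale d (a : R) (v : vec d) : vec d := fun j => a * v j.

Definition ebasis d (j : 'I_d) : vec d := fun k => if k == j then 1 else 0.

Definition dot d (u v : vec d) : R := \big[Rplus/0]_(j < d) (u j * v j).
Definition norm d (v : vec d) : R := sqrt (dot v v).
Definition linf_norm d (v : vec d) : R := \big[Rmax/0]_(j < d) Rabs (v j).

Definition nonzerob (x : R) : bool := if Req_EM_T x 0 then false else true.

Definition supp d (v : vec d) : {set 'I_d} := [set j | nonzerob (v j)].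
Definition l0 d (v : vec d) : nat := #|supp v|.

Definition convex_fun d (Q : vec d -> R) : Prop :=
  forall (x y : vec d) (t : R), 0 <= t <= 1 ->
    Q (vadd (vscale t x) (vscale (1 - t) y)) <= t * Q x + (1 - t) * Q y.

Definition is_C1_gradient d (Q : vec d -> R) (g : vec d -> vec d) : Prop :=
  (forall (b : vec d) (j : 'I_d),
      derivable_pt_lim (fun t => Q (vadd b (vscale t (ebasis j)))) 0 (g b j)) /\
  (forall (b : vec d) (j : 'I_d) (eps : R), 0 < eps ->
      exists delta, 0 < delta /\
        forall b' : vec d, norm (vsub b' b) < delta -> Rabs (g b' j - g b j) < eps).

Definition RSC d (Q : vec d -> R) (g : vec d -> vec d) (s : nat) (rm rp : R) : Prop :=
  0 < rm /\ 0 < rp /\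
  forall b b' : vec d, (l0 (vsub b' b) <= s)%N ->
    rm / 2 * (norm (vsub b' b))^2 <= Q b' - Q b - dot (g b) (vsub b' b) /\
    Q b' - Q b - dot (g b) (vsub b' b) <= rp / 2 * (norm (vsub b' b))^2.

Definition is_hat_beta d (Q : vec d -> R) (F : {set 'I_d}) (b : vec d) : Prop :=
  supp b \subset F /\ forall c : vec d, supp c \subset F -> Q b <= Q c.

(* Main.v *)
Require Import Defs.
From Stdlib Require Import Reals.
From mathcomp Require Import all_boot.
Open Scope R_scope.
From HB Require Import structures.
From Stdlib Require Import Lra Psatz FunctionalExtensionality.

HB.instance Definition _ := Monoid.isComLaw.Build R 0 Rplus
  (fun x y z => esym (Rplus_assoc x y z)) Rplus_comm Rplus_0_l.

Lemma nonzerob_false x : nonzerob x = false -> x = 0.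
Proof. rewrite /nonzerob; by case: Req_EM_T. Qed.

Lemma nonzerob_0 : nonzerob 0 = false.
Proof. rewrite /nonzerob; by case: Req_EM_T. Qed.

Lemma notin_supp d (v : vec d) j : j \notin supp v -> v j = 0.
Proof. rewrite inE => /negbTE; exact: nonzerob_false. Qed.

Lemma supp_sub d (v : vec d) (S : {set 'I_d}) :
  (forall k, k \notin S -> v k = 0) -> supp v \subset S.
Proof.
move=> H; apply/subsetP => k; rewrite inE => Hk; apply/negPn/negP => /H Hv.
by rewrite Hv nonzerob_0 in Hk.
Qed.

Lemma dot_single d (u v : vec d) i :
  (forall k, k != i -> v k = 0) -> dot u v = u i * v i.
Proof.
move=> H; rewrite /dot (bigD1 i) //= big1 ?Rplus_0_r // => k Hk.
by rewrite H // Rmult_0_r.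
Qed.

Lemma dot_ge0 d (v : vec d) : 0 <= dot v v.
Proof.
rewrite /dot; apply: (big_ind (fun x => 0 <= x)); first lra.
  move=> x y; lra.
move=> k _; nra.
Qed.

Lemma norm_sq d (v : vec d) : norm v ^ 2 = dot v v.
Proof. rewrite /norm pow2_sqrt //; exact: dot_ge0. Qed.

Lemma sum_lin (I : Type) (r : seq I) (F G : I -> R) x :
  \big[Rplus/0]_(k <- r) (F k + x * G k) =
  \big[Rplus/0]_(k <- r) F k + x * \big[Rplus/0]_(k <- r) G k.
Proof. elim: r => [|a r IH]; rewrite ?big_nil ?big_cons; [ring| rewrite IH; ring]. Qed.

Lemma sum_le (I : Type) (r : seq I) (F G : I -> R) :
  (forall k, F k <= G k) ->
  \big[Rplus/0]_(k <- r) F k <= \big[Rplus/0]_(k <- r) G k.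
Proof.
move=> H; apply: (big_ind2 (fun x y => x <= y)); first lra.
  move=> *; lra.
by move=> k _; apply: H.
Qed.

Lemma max_le (I : eqType) (r : seq I) (F : I -> R) j :
  j \in r -> Rabs (F j) <= \big[Rmax/0]_(k <- r) Rabs (F k).
Proof.
elim: r => [//|a r IH]; rewrite in_cons big_cons => /orP [/eqP ->|/IH H].
  exact: Rmax_l.
apply: Rle_trans H (Rmax_r _ _).
Qed.

Lemma linf_le d (v : vec d) j : Rabs (v j) <= linf_norm v.
Proof. rewrite /linf_norm; apply: max_le; exact: mem_index_enum. Qed.

Lemma sum_const_if d (S : {set 'I_d}) c :
  \big[Rplus/0]_(k < d) (if k \in S then c else 0) = INR #|S| * c.
Proof.
rewrite -big_mkcond /= big_const.
elim: #|S| => [|n IH]; first by rewrite /=; ring.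
rewrite iterS IH (S_INR n); ring.
Qed.

Lemma vsub_line d (b : vec d) j t :
  vsub (vadd b (vscale t (ebasis j))) b = vscale t (ebasis j).
Proof. apply: functional_extensionality => k; rewrite /vsub /vadd; ring. Qed.

Lemma line_add d (b : vec d) j a t :
  vadd (vadd b (vscale a (ebasis j))) (vscale t (ebasis j)) =
  vadd b (vscale (a + t) (ebasis j)).
Proof. apply: functional_extensionality => k; rewrite /vsub /vadd /vscale; ring. Qed.

Lemma rsc_line d (Q : vec d -> R) g s rm rp (H : RSC Q g s rm rp) (Hs : (0 < s)%N)
  b j t :
  rm / 2 * t ^ 2 <= Q (vadd b (vscale t (ebasis j))) - Q b - g b j * t <= rp / 2 * t ^ 2.
Proof.
case: H => _ [_ H].
have Hz : forall k, k != j -> vscale t (ebasis j) k = 0.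
  by move=> k Hk; rewrite /vscale /ebasis (negbTE Hk) Rmult_0_r.
have Hj : vscale t (ebasis j) j = t by rewrite /vscale /ebasis eqxx Rmult_1_r.
have Hl : (l0 (vsub (vadd b (vscale t (ebasis j))) b) <= s)%N.
  rewrite vsub_line /l0; apply: leq_trans Hs.
  have -> : 1%N = #|[set j]| by rewrite cards1.
  apply: subset_leq_card; apply: supp_sub => k; rewrite inE => Hk; exact: Hz.
move: (H b _ Hl); rewrite vsub_line norm_sq !(dot_single _ _ _ _ Hz) Hj.
move=> [H1 H2]; split; nra.
Qed.

Lemma line_min d (Q : vec d -> R) g (HC : is_C1_gradient Q g) rm rp
  (H : RSC Q g 1 rm rp) b i :
  exists eta0, forall eta, Q (vadd b (vscale eta0 (ebasis i)))
                           <= Q (vadd b (vscale eta (ebasis i))).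
Proof.
set phi := fun t => Q (vadd b (vscale t (ebasis i))).
have Hcont : forall c, continuity_pt phi c.
  move=> c; case: HC => [Hd _].
  have := Hd (vadd b (vscale c (ebasis i))) i.
  have -> : (fun t => Q (vadd (vadd b (vscale c (ebasis i))) (vscale t (ebasis i))))
            = fun t => phi (c + t).
    by apply: functional_extensionality => t; rewrite line_add.
  move=> Hl.
  have Hl' : derivable_pt_lim phi c (g (vadd b (vscale c (ebasis i))) i).
    move=> eps Heps; case: (Hl eps Heps) => del Hdel; exists del => h hn hl.
    by have := Hdel h hn hl; rewrite Rplus_0_l Rplus_0_r.
  apply: derivable_continuous_pt; exact: (exist _ _ Hl').
have Hrm : 0 < rm by case: H.
have Hphi0 : phi 0 = Q b.
  rewrite /phi; congr Q; apply: functional_extensionality => k.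
  rewrite /vadd /vscale; ring.
set h0 := g b i.
have Hco : forall t, rm / 2 * t ^ 2 <= phi t - Q b - h0 * t.
  move=> t; have [] := rsc_line _ _ _ _ _ _ H isT b i t; done.
set Rb := 2 * Rabs h0 / rm + 1.
have HRb : rm * Rb = 2 * Rabs h0 + rm by rewrite /Rb; field; lra.
have HRb0 : 0 < Rb.
  have : 0 <= 2 * Rabs h0 / rm.
    apply: Rmult_le_pos; first by have := Rabs_pos h0; lra.
    by left; apply: Rinv_0_lt_compat.
  rewrite /Rb; lra.
have [mx [Hmx Hmxi]] := continuity_ab_min phi (- Rb) Rb ltac:(lra) (fun c _ => Hcont c).
exists mx => t.
case: (Rle_lt_dec (Rabs t) Rb) => Ht.
  apply: Hmx; split; [have := Rle_abs (- t); rewrite Rabs_Ropp | have := Rle_abs t]; lra.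
apply: Rle_trans (Hmx 0 ltac:(lra)) _; rewrite Hphi0.
have := Hco t.
have Ha : - (Rabs h0 * Rabs t) <= h0 * t.
  rewrite -Rabs_mult; have := Rle_abs (- (h0 * t)); rewrite Rabs_Ropp; lra.
have Hsq : t ^ 2 = Rabs t * Rabs t by rewrite -pow2_abs /=; ring.
rewrite Hsq => Hc.
have : 0 <= Rabs t * (rm * Rabs t - rm * Rb).
  apply: Rmult_le_pos; [exact: Rabs_pos| nra].
have := Rabs_pos h0.
rewrite /phi in Hc *; nra.
Qed.

Theorem mainTheorem14 (d : nat) (Q : vec d -> R) (g : vec d -> vec d)
  (rho_m rho_p : nat -> R)
  (HQconv : convex_fun Q) (HQC1 : is_C1_gradient Q g)
  (F : {set 'I_d}) (beta : vec d) (Hbeta : is_hat_beta Q F beta)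
  (beta' : vec d) (s : nat) (Hs : (0 < s)%N)
  (HFs : (#|F :|: supp beta'| <= s)%N)
  (HRs : RSC Q g s (rho_m s) (rho_p s))
  (HR1 : RSC Q g 1 (rho_m 1%N) (rho_p 1%N))
  (i : 'I_d) (Hi : Rabs (g beta i) = linf_norm (g beta)) :
  exists eta0 : R,
    (forall eta : R, Q (vadd beta (vscale eta0 (ebasis i)))
                     <= Q (vadd beta (vscale eta (ebasis i)))) /\
    INR #|supp beta' :\: F| * (Q beta - Q (vadd beta (vscale eta0 (ebasis i))))
      >= rho_m s / rho_p 1%N * (Q beta - Q beta').
Proof.
case: Hbeta => HsF Hmin.
have [eta0 Heta] := line_min _ _ _ HQC1 _ _ HR1 beta i.
exists eta0; split => //.
set G := Rabs (g beta i).
set p := rho_p 1%N.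
set m := rho_m s.
have Hp : 0 < p by case: HR1 => _ [].
have Hm : 0 < m by case: HRs.
have Hb0 : forall k, k \notin F -> beta k = 0.
  move=> k Hk; apply: notin_supp; apply/negP => Hk'; move/negP: Hk; apply.
  exact: (subsetP HsF).
(* (a) first-order optimality on F *)
have gF : forall j, j \in F -> g beta j = 0.
  move=> j Hj.
  have Hsup : forall t, supp (vadd beta (vscale t (ebasis j))) \subset F.
    move=> t; apply: supp_sub => k Hk.
    have Hkj : k != j by apply/eqP => E; rewrite E Hj in Hk.
    rewrite /vadd /vscale /ebasis (negbTE Hkj) Hb0 //; ring.
  set x := g beta j.
  set t := - x / p.
  have H1 := Hmin _ (Hsup t).
  have [_ H2] := rsc_line _ _ _ _ _ _ HR1 (isT : (0 < 1)%N) beta j t.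
  have E : x * t + p / 2 * t ^ 2 = - (x ^ 2 / (2 * p)) by rewrite /t; field; lra.
  have : x ^ 2 / (2 * p) <= 0 by rewrite -/p -/x in H2; lra.
  move=> H3.
  have : x ^ 2 <= 0.
    have -> : x ^ 2 = (x ^ 2 / (2 * p)) * (2 * p) by field; lra.
    nra.
  nra.
have Hline : G ^ 2 / (2 * p) <= Q beta - Q (vadd beta (vscale eta0 (ebasis i))).
  set x := g beta i.
  set t := - x / p.
  have H1 := Heta t.
  have [_ H2] := rsc_line _ _ _ _ _ _ HR1 (isT : (0 < 1)%N) beta i t.
  have E : x * t + p / 2 * t ^ 2 = - (x ^ 2 / (2 * p)) by rewrite /t; field; lra.
  rewrite /G pow2_abs -/x; rewrite -/p -/x in H2; lra.
set S := supp beta' :\: F.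
set u := vsub beta' beta.
have Hl : (l0 u <= s)%N.
  apply: leq_trans HFs; apply: subset_leq_card; apply: supp_sub => k.
  rewrite in_setU negb_or => /andP [HkF Hk'].
  by rewrite /u /vsub (notin_supp _ _ _ Hk') Hb0 //; ring.
have [H1 _] := (proj2 (proj2 HRs)) beta beta' Hl.
fold u in H1; fold m in H1; rewrite norm_sq in H1.
have Hsum : INR #|S| * (- (G ^ 2 / (2 * m))) <= dot (g beta) u + m / 2 * dot u u.
  rewrite /dot -sum_lin -sum_const_if; apply: sum_le => k.
  case: (boolP (k \in F)) => HkF.
    have -> : k \in S = false by rewrite in_setD HkF.
    rewrite gF //; nra.
  case: (boolP (k \in supp beta')) => Hk'.
    have -> : k \in S = true by rewrite in_setD HkF Hk'.
    have Hg : Rabs (g beta k) <= G by rewrite /G Hi; exact: linf_le.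
    have Hg2 : g beta k ^ 2 <= G ^ 2.
      rewrite -(pow2_abs (g beta k)); have := Rabs_pos (g beta k); nra.
    set y := u k; set z := g beta k in Hg2 *.
    have E : z * y + m / 2 * (y * y) + G ^ 2 / (2 * m)
           = ((m * y + z) ^ 2 + (G ^ 2 - z ^ 2)) / (2 * m) by field; lra.
    have : 0 <= ((m * y + z) ^ 2 + (G ^ 2 - z ^ 2)) / (2 * m).
      apply: Rmult_le_pos; first by have := pow2_ge_0 (m * y + z); lra.
      by left; apply: Rinv_0_lt_compat; lra.
    lra.
  have -> : k \in S = false by rewrite in_setD HkF (negbTE Hk').
  rewrite /u /vsub (notin_supp _ _ _ Hk') Hb0 //; ring_simplify; lra.
have Hbnd : Q beta - Q beta' <= INR #|S| * (G ^ 2 / (2 * m)) by lra.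
have HI := pos_INR #|S|.
have E : m / p * (INR #|S| * (G ^ 2 / (2 * m))) = INR #|S| * (G ^ 2 / (2 * p))
  by field; lra.
have Hmp : 0 <= m / p by left; apply: Rdiv_lt_0_compat.
apply: Rle_ge.
apply: Rle_trans (Rmult_le_compat_l _ _ _ Hmp Hbnd) _.
rewrite E; apply: Rmult_le_compat_l => //.
Qed.
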